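(* Consider the discrete-time system $x_{k+1}=A_kx_k+b_ku_k$, $y_k=c_kx_k$ ($k\in\mathbb{Z}$) with $A_k\in\mathbb{R}^{n\times n}$, $b_k\in\mathbb{R}^{n\times1}$, $c_k\in\mathbb{R}^{1\times n}$. If the system is completely controllable, completely observable and $c_k\operatorname{adj}(A_k)b_k\neq0$ for every $k\in\mathbb{Z}$, then there exists a linear time-varying output-feedback controller of the form $u_k=F_ky_k$ (with scalars $F_k$) that steers any initial state at any time to the origin in $2(n^4+n^3+n^2)$ steps.
   Context: Complete controllability: for every $k\in\mathbb{Z}$ and every $\xi_s,\xi_f\in\mathbb{R}^n$ there are controls $u_k,\dots,u_{k+n-1}$ with $x_k=\xi_s\Rightarrow x_{k+n}=\xi_f$. Complete observability: for every $k\in\mathbb{Z}$ and all controls $u_k,\dots,u_{k+n-2}$, $x_k$ is uniquely determined by $y_k,\dots,y_{k+n-1}$. $\operatorname{adj}(A)$ is the adjugate of $A$ (so $A\operatorname{adj}(A)=\det(A)I$). Under $u_k=F_ky_k$ the closed-loop dynamics are $x_{k+1}=(A_k+F_kb_kc_k)x_k$. *)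

(* Defs.v *)
From HB Require Import structures.
From mathcomp Require Import all_boot all_order all_algebra.
From mathcomp Require Import reals.
Set Implicit Arguments. Unset Strict Implicit. Unset Printing Implicit Defensive.
Import Order.TTheory GRing.Theory Num.Theory.
Local Open Scope ring_scope.

Section Sys.
Variables (R : realType) (n : nat).
Variables (A : int -> 'M[R]_n) (b : int -> 'cV[R]_n) (c : int -> 'rV[R]_n).

Fixpoint state (u : int -> R) (k0 : int) (x0 : 'cV[R]_n) (m : nat) : 'cV[R]_n :=
  match m with
  | 0 => x0
  | m'.+1 => let k := k0 + m'%:Z in
             A k *m state u k0 x0 m' + u k *: b k
  end.

Definition output (u : int -> R) (k0 : int) (x0 : 'cV[R]_n) (m : nat) : R :=
  (c (k0 + m%:Z) *m state u k0 x0 m) 0 0.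

Definition completely_controllable : Prop :=
  forall (k : int) (xs xf : 'cV[R]_n),
    exists u : int -> R, state u k xs n = xf.

Definition completely_observable : Prop :=
  forall (k : int) (u : int -> R) (x x' : 'cV[R]_n),
    (forall i : nat, (i < n)%N -> output u k x i = output u k x' i) -> x = x'.

(* closed loop x_{k+1} = (A_k + F_k b_k c_k) x_k under u_k = F_k y_k *)
Fixpoint cl_state (F : int -> R) (k0 : int) (x0 : 'cV[R]_n) (m : nat) : 'cV[R]_n :=
  match m with
  | 0 => x0
  | m'.+1 => let k := k0 + m'%:Z in
             (A k + F k *: (b k *m c k)) *m cl_state F k0 x0 m'
  end.

End Sys.

(* Main.v *)
Require Import Defs.
From HB Require Import structures.
From mathcomp Require Import all_boot all_order all_algebra.
From mathcomp Require Import reals.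
From mathcomp.algebra_tactics Require Import ring lra.
From mathcomp Require Import zify.
Import Order.TTheory GRing.Theory Num.Theory.
Local Open Scope ring_scope.
Set Implicit Arguments. Unset Strict Implicit. Unset Printing Implicit Defensive.

Section Lin.
Variables (R : realType) (n : nat).
Implicit Types (A : 'M[R]_n) (b y : 'cV[R]_n) (c : 'rV[R]_n).

Lemma rank_adj_ge A : \adj A != 0 -> (n.-1 <= \rank A)%N.
Proof.
case: n A => [|n'] A //= hadj.
have [i [j Hij]] : exists i j, \adj A i j != 0.
  case/boolP: [exists i, [exists j, \adj A i j != 0]].
    by case/existsP=> i /existsP[j H]; exists i, j.
  move/existsPn=> H; case/eqP: hadj; apply/matrixP=> i j.
  by move: (H i) => /existsPn/(_ j); rewrite negbK => /eqP ->; rewrite mxE.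
move: Hij; rewrite mxE /cofactor mulf_eq0 negb_or => /andP[_ hd].
have hu : row' j (col' i A) \in unitmx by rewrite unitmxE unitfE.
have e1 : \rank (row' j (col' i A)) = n' by rewrite (mxrank_unit hu).
apply: leq_trans (_ : \rank (row' j (col' i A)) <= _)%N; first by rewrite e1.
rewrite row'Esub rowsubE.
apply: leq_trans (mxrankM_maxr _ _) _.
by rewrite -mxrank_tr tr_col' row'Esub rowsubE (leq_trans (mxrankM_maxr _ _)) // mxrank_tr.
Qed.

Lemma ker_line A b c : (c *m \adj A *m b) 0 0 != 0 -> \det A = 0 ->
  forall y, A *m y = 0 -> exists k, y = k *: (\adj A *m b).
Proof.
move=> hg hd y hy; set w := \adj A *m b.
have wn0 : w != 0 by apply: contraNneq hg; rewrite -mulmxA -/w => ->; rewrite mulmx0 mxE.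
have adjn0 : \adj A != 0 by apply: contraNneq wn0; rewrite /w => ->; rewrite mul0mx.
have hw : A *m w = 0 by rewrite /w mulmxA mul_mx_adj hd mul_scalar_mx scale0r.
set K := kermx A^T.
have yK : (y^T <= K)%MS by apply/sub_kermxP; rewrite -trmx_mul hy trmx0.
have wK : (w^T <= K)%MS by apply/sub_kermxP; rewrite -trmx_mul hw trmx0.
have rK : (\rank K <= 1)%N.
  rewrite mxrank_ker mxrank_tr; have := rank_adj_ge adjn0; lia.
have rw : \rank w^T = 1%N by rewrite rank_rV trmx_eq0 wn0.
have : (w^T == K)%MS.
  by rewrite -(mxrank_leqif_eq wK) rw; apply/eqP; apply: anti_leq; rewrite rK -rw mxrankS.
move/eqmxP=> eqK; have : (y^T <= w^T)%MS by rewrite eqK.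
case/submxP=> D hD; exists (D 0 0).
by rewrite -[y]trmxK hD {1}[D]mx11_scalar mul_scalar_mx linearZ /= trmxK.
Qed.

Lemma K4 A b c : (c *m \adj A *m b) 0 0 != 0 -> \det A = 0 ->
  forall y, A *m y != b.
Proof.
move=> hg hd y; apply: contraNneq hg => <-.
by rewrite -!mulmxA (mulmxA (\adj A)) mul_adj_mx hd mul_scalar_mx scale0r mulmx0 mxE.
Qed.

Lemma K1 A b c : (c *m \adj A *m b) 0 0 != 0 ->
  forall y a, A *m y = a *: b -> exists k, y = k *: (\adj A *m b).
Proof.
move=> hg y a hy; case: (eqVneq (\det A) 0) => hd.
  have a0 : a = 0.
    apply/eqP; apply: contraNT (K4 hg hd (a^-1 *: y)) => ha.
    by rewrite -scalemxAr hy scalerA mulVf // scale1r.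
  by apply: (ker_line hg hd); rewrite hy a0 scale0r.
exists ((\det A)^-1 * a).
by rewrite -scalerA scalemxAr -hy mulmxA mul_adj_mx mul_scalar_mx scalerA mulVf // scale1r.
Qed.

End Lin.

Section Sys.
Variables (R : realType) (n : nat).
Variables (A : int -> 'M[R]_n) (b : int -> 'cV[R]_n) (c : int -> 'rV[R]_n).

Definition Mk k f := A k + f *: (b k *m c k).

Fixpoint PhiF (F : int -> R) (k0 : int) (m : nat) : 'M[R]_n :=
  match m with
  | 0 => 1%:M
  | m'.+1 => Mk (k0 + m'%:Z) (F (k0 + m'%:Z)) *m PhiF F k0 m'
  end.

Lemma cl_stateE F k0 x m : cl_state A b c F k0 x m = PhiF F k0 m *m x.
Proof. by elim: m => [|m IH] /=; rewrite ?mul1mx // IH mulmxA. Qed.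

Lemma clS F k0 x m : cl_state A b c F k0 x m.+1 =
  A (k0 + m%:Z) *m cl_state A b c F k0 x m +
  (F (k0 + m%:Z) * (c (k0 + m%:Z) *m cl_state A b c F k0 x m) 0 0) *: b (k0 + m%:Z).
Proof.
rewrite /= mulmxDl; congr (_ + _); rewrite -scalemxAl -mulmxA.
by rewrite {1}[c _ *m _]mx11_scalar mul_mx_scalar scalerA.
Qed.

Lemma PhiF_loc F1 F2 k0 m : (forall i, (i < m)%N -> F1 (k0 + i%:Z) = F2 (k0 + i%:Z)) ->
  PhiF F1 k0 m = PhiF F2 k0 m.
Proof.
elim: m => [|m IH] //= H; rewrite H // IH // => i hi; apply: H; lia.
Qed.

Lemma cl_loc F1 F2 k0 x m : (forall i, (i < m)%N -> F1 (k0 + i%:Z) = F2 (k0 + i%:Z)) ->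
  cl_state A b c F1 k0 x m = cl_state A b c F2 k0 x m.
Proof. by move=> H; rewrite !cl_stateE (PhiF_loc H). Qed.

Lemma PhiF_comp F k0 m1 m2 :
  PhiF F k0 (m1 + m2) = PhiF F (k0 + m1%:Z) m2 *m PhiF F k0 m1.
Proof.
elim: m2 => [|m2 IH]; first by rewrite addn0 mul1mx.
by rewrite addnS /= IH mulmxA PoszD addrA.
Qed.

End Sys.

Lemma mx1_neq0 (R : realType) (M : 'M[R]_1) : (M != 0) = (M 0 0 != 0).
Proof.
case: (eqVneq (M 0 0) 0) => h /=; last by apply: contraNneq h => ->; rewrite mxE.
apply/negbTE/negPn/eqP/matrixP => i j.
by rewrite !ord1 h mxE.
Qed.

Lemma avoid_list (R : realFieldType) (l : seq R) : exists f : R, f \notin l.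
Proof.
have H : forall v, v \in l -> `|v| <= \sum_(u <- l) `|u|.
  elim: l => [|a l IH] v //; rewrite inE big_cons => /orP[/eqP ->|/IH h].
    by rewrite lerDl sumr_ge0.
  by rewrite (le_trans h) // lerDr.
exists (1 + \sum_(u <- l) `|u|); apply/negP=> /H.
rewrite ger0_norm ?addr_ge0 ?sumr_ge0 // => h; lra.
Qed.

Lemma avoid_aff (R : realFieldType) (l : seq (R * R)) :
  exists f : R, forall p, p \in l -> (p.1 != 0) || (p.2 != 0) -> p.1 + f * p.2 != 0.
Proof.
have [f hf] := avoid_list [seq - p.1 / p.2 | p <- l].
exists f => p pl h.
case: (eqVneq p.2 0) => [e2|h2].
  by move: h; rewrite e2 eqxx orbF mulr0 addr0.
apply: contra hf => /eqP e; apply/mapP; exists p => //.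
have e' : f * p.2 = - p.1 by apply/eqP; rewrite -addr_eq0 addrC e.
by rewrite -e' mulfK.
Qed.

Section SV.
Variables (R : realType) (n : nat).
Variables (A : int -> 'M[R]_n) (b : int -> 'cV[R]_n) (c : int -> 'rV[R]_n).
Hypothesis hW : forall k, (c k *m \adj (A k) *m b k) 0 0 != 0.
Hypothesis hC : completely_controllable A b.
Hypothesis hO : completely_observable A b c.
Variables (s : int) (x : 'cV[R]_n).

Local Notation tm j := (s + (j : nat)%:Z).
Definition Am j : 'End('cV[R]_n) := linfun (mulmx (A (tm j))).
Definition Cm j : 'Hom('cV[R]_n, 'M[R]_1) := linfun (mulmx (c (tm j))).
Local Notation bt j := (b (tm j)).
Local Notation wt j := (\adj (A (tm j)) *m b (tm j)).

Fixpoint Lam (m : nat) : {vspace 'cV[R]_n} :=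
  match m with
  | 0 => <[x]>%VS
  | m'.+1 => (Am m' @: Lam m' +
       (if ~~ (Lam m' <= lker (Cm m'))%VS then <[bt m']> else 0))%VS
  end.
Definition kick j := ~~ (Lam j <= lker (Cm j))%VS.
Lemma LamS j : Lam j.+1 = (Am j @: Lam j + (if kick j then <[bt j]> else 0))%VS.
Proof. by []. Qed.

Local Notation z F m := (cl_state A b c F s x m).

Lemma mx1_addZ (M1 M2 : 'M[R]_1) a : (M1 + a *: M2) 0 0 = M1 0 0 + a * M2 0 0.
Proof. by rewrite !mxE. Qed.

Lemma tm_eq i j : (tm i == tm j) = (i == j).
Proof. by rewrite (inj_eq (@addrI _ s)) eqz_nat. Qed.

Lemma AmE j y : Am j y = A (tm j) *m y. Proof. by rewrite lfunE. Qed.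
Lemma CmE j y : Cm j y = c (tm j) *m y. Proof. by rewrite lfunE. Qed.


Lemma hb j : bt j != 0.
Proof. by apply: contraNneq (hW (tm j)) => ->; rewrite mulmx0 mxE. Qed.

Lemma hcw j : (c (tm j) *m wt j) 0 0 != 0.
Proof. by rewrite mulmxA; exact: hW. Qed.

Lemma K1t j y a : A (tm j) *m y = a *: bt j -> exists k, y = k *: wt j.
Proof. move=> h; have := K1 (hW (tm j)) h. by []. Qed.

Lemma Lam_c j y : ~~ kick j -> y \in Lam j -> c (tm j) *m y = 0.
Proof. by rewrite /kick negbK => /subvP H /H; rewrite memv_ker CmE => /eqP. Qed.

Lemma Lam_kick j : kick j -> exists2 y, y \in Lam j & c (tm j) *m y != 0.
Proof. by case/subvPn => y hy; rewrite memv_ker CmE => h; exists y. Qed.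

Lemma cw_eq0 j k : (c (tm j) *m (k *: wt j) = 0) -> k = 0.
Proof.
move/eqP; rewrite -scalemxAr scaler_eq0 => /orP[/eqP //|].
by move=> h; have := hcw j; rewrite (eqP h) mxE eqxx.
Qed.

Lemma inj_nk j y : ~~ kick j -> y \in Lam j -> A (tm j) *m y = 0 -> y = 0.
Proof.
move=> hk hy hA; have [k ey] : exists k, y = k *: wt j.
  by apply: (K1t (a:=0)); rewrite hA scale0r.
by move: (Lam_c hk hy); rewrite ey => /cw_eq0 ->; rewrite scale0r.
Qed.

Lemma Lam_A j y : y \in Lam j -> A (tm j) *m y \in Lam j.+1.
Proof. by move=> hy; rewrite LamS; apply: (subvP (addvSl _ _)); rewrite -AmE memv_img. Qed.

Lemma Lam_b j : kick j -> bt j \in Lam j.+1.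
Proof. by move=> hk; rewrite LamS hk; apply: (subvP (addvSr _ _)); exact: memv_line. Qed.

Lemma z_Lam F m : z F m \in Lam m.
Proof.
elim: m => [|m IH]; first by rewrite /= memv_line.
rewrite clS LamS; apply: memv_add; first by rewrite -AmE memv_img.
case: ifP => hk; first by rewrite memvZ // memv_line.
by rewrite (Lam_c (negbT hk) IH) mxE mulr0 scale0r mem0v.
Qed.

Lemma ker_w j U : (U :&: lker (Am j) <= <[wt j]>)%VS.
Proof.
apply/subvP => y; rewrite memv_cap memv_ker AmE => /andP[_ /eqP hA].
have [k ->] : exists k, y = k *: wt j by apply: (K1t (a:=0)); rewrite hA scale0r.
by rewrite memvZ // memv_line.
Qed.

Lemma dim_ker_le1 j U : (\dim (U :&: lker (Am j)) <= 1)%N.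
Proof. by rewrite (leq_trans (dimvS (ker_w j U))) // dim_vline leq_b1. Qed.

Lemma ker0_det j U : \det (A (tm j)) != 0 -> (U :&: lker (Am j) = 0)%VS.
Proof.
move=> hd; apply/eqP; rewrite -subv0; apply/subvP => y.
rewrite memv_cap memv_ker AmE memv0 => /andP[_ /eqP hA].
have -> : y = (\det (A (tm j)))^-1 *: (\adj (A (tm j)) *m (A (tm j) *m y)).
  by rewrite mulmxA mul_adj_mx mul_scalar_mx scalerA mulVf // scale1r.
by rewrite hA mulmx0 scaler0.
Qed.

Lemma ker0_nk j U : ~~ kick j -> (U <= Lam j)%VS -> (U :&: lker (Am j) = 0)%VS.
Proof.
move=> hk hU; apply/eqP; rewrite -subv0; apply/subvP => y.
rewrite memv_cap memv_ker AmE memv0 => /andP[hy /eqP hA].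
by rewrite (inj_nk hk (subvP hU _ hy) hA).
Qed.

Lemma img_b_disj j U : \det (A (tm j)) = 0 -> (Am j @: U :&: <[bt j]> = 0)%VS.
Proof.
move=> hd; apply/eqP; rewrite -subv0; apply/subvP => v.
rewrite memv_cap memv0 => /andP[/memv_imgP[y _ ->] /vlineP[a ha]].
rewrite AmE in ha *; case: (eqVneq a 0) => [a0|an0]; first by rewrite ha a0 scale0r.
have := K4 (hW (tm j)) hd (a^-1 *: y).
by rewrite -scalemxAr ha scalerA mulVf // scale1r eqxx.
Qed.

Lemma Lam_dimS j : (\dim (Lam j) <= \dim (Lam j.+1))%N.
Proof.
have hsum := limg_ker_dim (Am j) (Lam j).
case hk: (kick j); last first.
  rewrite LamS hk addv0 limg_dim_eq //; exact: ker0_nk (negbT hk) (subvv _).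
rewrite LamS hk.
case: (eqVneq (\det (A (tm j))) 0) => hd.
  rewrite dimv_disjoint_sum ?img_b_disj // dim_vline hb /=.
  by rewrite -{1}hsum addnC leq_add2l dim_ker_le1.
by rewrite (leq_trans _ (dimvS (addvSl _ _))) // limg_dim_eq // ker0_det.
Qed.


Lemma Lam_dim_mono i j : (i <= j)%N -> (\dim (Lam i) <= \dim (Lam j))%N.
Proof.
elim: j => [|j IH] hij; first by rewrite leqn0 in hij; move/eqP: hij => ->.
rewrite leq_eqVlt in hij; case/orP: hij => [/eqP-> //|].
by rewrite ltnS => /IH h; exact: leq_trans h (Lam_dimS j).
Qed.

Lemma Lam_dim_le j : (\dim (Lam j) <= n)%N.
Proof. by rewrite (leq_trans (dimvS (subvf _))) // dimvf dim_matrix mulr1. Qed.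

Lemma GEN m (l : seq 'Hom('cV[R]_n, 'M[R]_1)) : exists F, forall phi, phi \in l ->
  (exists2 y, y \in Lam m & phi y != 0) -> phi (z F m) != 0.
Proof.
elim: m l => [|m IH] l.
  exists (fun _ => 0) => phi _ [y /vlineP[k ->]]; rewrite linearZ /=.
  by apply: contraNneq => ->; rewrite scaler0.
set l' := Cm m :: [seq (phi \o Am m)%VF | phi <- l].
have [F hF] := IH l'.
set zz := z F m; set g := (c (tm m) *m zz) 0 0.
pose pr (phi : 'Hom('cV[R]_n, 'M[R]_1)) :=
  ((phi (A (tm m) *m zz)) 0 0, g * (phi (bt m)) 0 0).
have [f hf] := avoid_aff [seq pr phi | phi <- l].
pose F' := fun k => if k == tm m then f else F k.
exists F' => phi hphi hnz.
have ez : z F' m = zz.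
  by apply: cl_loc => i hi; rewrite /F' tm_eq (ltn_eqF hi).
rewrite clS ez /F' eqxx linearD linearZ /= mx1_neq0 mx1_addZ -mulrA.
apply: (hf (pr phi) (map_f _ hphi)).
case: hnz => y; rewrite LamS => /memv_addP[u /memv_imgP[y1 hy1 ->] [v hv ->]].
rewrite linearD /= => hsum.
case: (eqVneq (phi (Am m y1)) 0) => hu; last first.
  have : (phi \o Am m)%VF zz != 0.
    apply: hF.
      by rewrite inE; apply/orP; right; exact: (map_f (fun phi => (phi \o Am m)%VF) hphi).
    by exists y1 => //; rewrite comp_lfunE.
  by rewrite comp_lfunE AmE mx1_neq0 => ->.
rewrite hu add0r in hsum.
move: hv; case: ifP => hk; last by rewrite memv0 => /eqP hv; rewrite hv linear0 eqxx in hsum.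
case/vlineP=> a ha; rewrite ha linearZ in hsum.
have hc : Cm m zz != 0.
  apply: hF; first by rewrite inE eqxx.
  have [y2 hy2 hc2] := Lam_kick hk; exists y2 => //; by rewrite CmE.
rewrite CmE mx1_neq0 in hc.
apply/orP; right; rewrite mulf_neq0 //.
by move: hsum; rewrite mx1_neq0 mxE mulf_eq0 negb_or => /andP[_ ->].
Qed.

Lemma pigeon : exists2 k, (k <= n)%N & \dim (Lam (k * n)) = \dim (Lam (k * n + n)).
Proof.
case/boolP: [exists k : 'I_n.+1, \dim (Lam (k * n)) == \dim (Lam (k * n + n))].
  by case/existsP=> k /eqP hk; exists k => //; rewrite -ltnS ltn_ord.
move/existsPn=> H; exfalso.
have key : forall k, (k <= n.+1)%N -> (k <= \dim (Lam (k * n)))%N.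
  elim => [|k IH] hk //.
  have hne := H (Ordinal hk); rewrite /= in hne.
  have h1 := IH (ltnW hk).
  have h2 := Lam_dim_mono (leq_addr n (k * n)).
  rewrite mulSn addnC; apply: leq_ltn_trans h1 _.
  by rewrite ltn_neqAle hne h2.
have h1 := key n.+1 (leqnn _); have h2 := Lam_dim_le (n.+1 * n).
by have := leq_trans h1 h2; rewrite ltnn.
Qed.


Lemma tmD j m : tm j + m%:Z = tm (j + m).
Proof. by rewrite -addrA -PoszD. Qed.

Fixpoint PhiA j m : 'M[R]_n :=
  match m with 0 => 1%:M | m'.+1 => A (tm (j + m')) *m PhiA j m' end.

Lemma Lam_PhiA j m y : y \in Lam j -> PhiA j m *m y \in Lam (j + m).
Proof.
elim: m => [|m IH] hy /=; first by rewrite addn0 mul1mx.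
by rewrite -mulmxA addnS; apply: Lam_A; exact: IH.
Qed.

Lemma state0 j m y : state A b (fun _ => 0) (tm j) y m = PhiA j m *m y.
Proof.
elim: m => [|m IH] /=; first by rewrite mul1mx.
by rewrite IH scale0r addr0 mulmxA tmD.
Qed.

Lemma state_lin u k y m :
  state A b u k y m = state A b (fun _ => 0) k y m + state A b u k 0 m.
Proof.
elim: m => [|m IH] /=; first by rewrite addr0.
by rewrite IH mulmxDr scale0r addr0 addrA.
Qed.

Lemma state_loc u1 u2 k y m : (forall i, (i < m)%N -> u1 (k + i%:Z) = u2 (k + i%:Z)) ->
  state A b u1 k y m = state A b u2 k y m.
Proof.
elim: m => [|m IH] //= H; rewrite H // IH // => i hi; apply: H; lia.
Qed.

Lemma state_front u k y m : state A b u k y m.+1 =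
  state A b u (k + 1) (A k *m y + u k *: b k) m.
Proof.
elim: m => [|m IH]; first by rewrite /= !addr0.
transitivity (A (k + m.+1%:Z) *m state A b u k y m.+1 + u (k + m.+1%:Z) *: b (k + m.+1%:Z)).
  by [].
rewrite IH; have -> : k + m.+1%:Z = k + 1 + m%:Z by rewrite -addrA -PoszD add1n.
by [].
Qed.


Fixpoint Sb m j : {vspace 'cV[R]_n} :=
  match m with 0 => 0%VS | m'.+1 =>
    (Am j @^-1: (Sb m' j.+1 + (if kick j then <[bt j]> else 0)))%VS end.

Definition ks j m := (\sum_(i < m) (kick (j + i) : nat))%N.

Lemma ksS j m : ks j m.+1 = (kick j + ks j.+1 m)%N.
Proof.
rewrite /ks big_ord_recl addn0; congr (_ + _)%N.
by apply: eq_bigr => i _; rewrite lift0 addnS addSn.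
Qed.

Lemma step_mem m j y : y \in Sb m.+1 j -> y \in Lam j ->
  A (tm j) *m y \in ((Sb m j.+1 :&: Lam j.+1) + (if kick j then <[bt j]> else 0))%VS.
Proof.
move=> hy1 hy2; move: hy1; rewrite [Sb _ _]/= -memv_preim AmE.
case hk: (kick j) => hy1; last first.
  by rewrite addv0 in hy1; rewrite addv0 memv_cap hy1 Lam_A.
case/memv_addP: hy1 => s1 hs1 [v2 /vlineP[a ->] e].
apply/memv_addP; exists s1; last by exists (a *: bt j) => //; rewrite memvZ // memv_line.
rewrite memv_cap hs1 /=.
have -> : s1 = A (tm j) *m y - a *: bt j by rewrite e addrK.
by rewrite memvB // ?Lam_A // memvZ // Lam_b.
Qed.

Lemma W5 m j : (\dim (Sb m j :&: Lam j) <= ks j m)%N.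
Proof.
elim: m j => [|m IH] j; first by rewrite /= cap0v dimv0.
rewrite ksS; set X := (Sb m.+1 j :&: Lam j)%VS; set U := (Sb m j.+1 :&: Lam j.+1)%VS.
have hX : (Am j @: X <= U + (if kick j then <[bt j]> else 0))%VS.
  apply/subvP => v /memv_imgP[y]; rewrite memv_cap => /andP[hy1 hy2] ->.
  by rewrite AmE; exact: step_mem.
have hd := limg_ker_dim (Am j) X.
have e1 : \dim <[bt j]> = 1%N by rewrite dim_vline hb.
case hk: (kick j) in hX *; last first.
  rewrite addv0 in hX; rewrite add0n -hd (ker0_nk (negbT hk) (capvSr _ _)) dimv0 add0n.
  exact: leq_trans (dimvS hX) (IH _).
case: (eqVneq (\det (A (tm j))) 0) => hdet.
  have h1 := dim_ker_le1 j X.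
  have h2 : (\dim (Am j @: X + <[bt j]>) <= \dim U + 1)%N.
    apply: leq_trans (dimvS (_ : (_ <= U + <[bt j]>)%VS)) _.
      by rewrite subv_add hX addvSr.
    by case: (dimv_add_leqif U <[bt j]>) => h _; rewrite e1 in h.
  rewrite dimv_disjoint_sum ?img_b_disj // e1 leq_add2r in h2; rewrite -hd /=.
  exact: leq_add h1 (leq_trans h2 (IH _)).
rewrite -hd (ker0_det _ hdet) dimv0 add0n.
apply: leq_trans (dimvS hX) _; apply: leq_trans (dimv_add_leqif _ _) _.
by rewrite addnC e1 leq_add2l IH.
Qed.

Lemma W1 j : kick j -> \dim (Lam j) = \dim (Lam j.+1) -> wt j \in Lam j.
Proof.
move=> hk hdim; case/boolP: (wt j \in Lam j) => // hw; exfalso.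
have hker : (Lam j :&: lker (Am j) = 0)%VS.
  apply/eqP; rewrite -subv0; apply/subvP => y.
  rewrite memv_cap memv_ker AmE memv0 => /andP[hy /eqP hA].
  have [k ey] : exists k, y = k *: wt j by apply: (K1t (a:=0)); rewrite hA scale0r.
  case: (eqVneq k 0) => [k0|kn0]; first by rewrite ey k0 scale0r.
  by move: hw; rewrite -(scalerK kn0 (wt j)) -ey memvZ.
have himg : (Am j @: Lam j)%VS = Lam j.+1.
  apply/eqP; rewrite eqEdim limg_dim_eq // hdim leqnn andbT LamS.
  exact: addvSl.
have := Lam_b hk; rewrite -himg => /memv_imgP[y hy].
rewrite AmE => /esym e.
have [k ey] : exists k, y = k *: wt j by apply: (K1t (a:=1)); rewrite e scale1r.
case: (eqVneq k 0) => [k0|kn0].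
  by move: (hb j); rewrite -e ey k0 scale0r mulmx0 eqxx.
by move: hw; rewrite -(scalerK kn0 (wt j)) -ey memvZ.
Qed.

Section Window.
Variable r : nat.
Hypothesis hr : \dim (Lam r) = \dim (Lam (r + n)).

Definition nK := (\sum_(i < n) (kick (r + i) : nat))%N.

Fixpoint Zo d : {vspace 'cV[R]_n} :=
  match d with
  | 0 => Lam r
  | d'.+1 => (Zo d' :&: (if kick (r + d')
       then lker (Cm (r + d') \o linfun (mulmx (PhiA r d'))) else fullv))%VS
  end.

Lemma Zo_dim d : (\dim (Lam r) <= \dim (Zo d) + \sum_(i < d) (kick (r + i) : nat))%N.
Proof.
elim: d => [|d IH]; first by rewrite big_ord0 addn0.
rewrite big_ord_recr /=; case: ifP => hk /=; last by rewrite capvf addn0.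
have := limg_ker_dim (Cm (r + d) \o linfun (mulmx (PhiA r d)))%VF (Zo d).
have : (\dim ((Cm (r + d) \o linfun (mulmx (PhiA r d)))%VF @: Zo d) <= 1)%N.
  by rewrite (leq_trans (dimvS (subvf _))) // dimvf dim_matrix.
move=> h1 h2; rewrite -h2 in IH; apply: leq_trans IH _; by rewrite -addnA leq_add2l addnC leq_add2l.
Qed.

Lemma Zo_mem d y : y \in Zo d -> y \in Lam r /\
  forall i, (i < d)%N -> kick (r + i) -> c (tm (r + i)) *m (PhiA r i *m y) = 0.
Proof.
elim: d => [|d IH] /=; first by [].
rewrite memv_cap => /andP[/IH[hy H] hk]; split => // i; rewrite ltnS leq_eqVlt.
case/orP => [/eqP -> hki|/H //]; move: hk; rewrite hki memv_ker comp_lfunE !lfunE /=.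
by move/eqP.
Qed.

Lemma W3 : (\dim (Lam r) <= nK)%N.
Proof.
have := Zo_dim n.
suff -> : Zo n = 0%VS by rewrite dimv0.
apply/eqP; rewrite -subv0; apply/subvP => y /Zo_mem [hy H]; rewrite memv0.
apply/eqP; apply: (hO (k := tm r) (u := fun _ => 0)) => i hi.
rewrite /output !state0 !mulmx0 [in RHS]mxE tmD.
case hk: (kick (r + i)); first by rewrite H // mxE.
by rewrite (Lam_c (negbT hk) (Lam_PhiA i hy)) mxE.
Qed.


Fixpoint Vf j m : {vspace 'cV[R]_n} :=
  match m with 0 => 0%VS | m'.+1 =>
    (Am (j + m') @: Vf j m' + (if kick (j + m') then <[bt (j + m')]> else 0))%VS end.
Fixpoint Nf j m : {vspace 'cV[R]_n} :=
  match m with 0 => 0%VS | m'.+1 =>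
    (Am (j + m') @: Nf j m' + (if kick (j + m') then 0 else <[bt (j + m')]>))%VS end.

Lemma Vf_Lam j m : (Vf j m <= Lam (j + m))%VS.
Proof.
elim: m => [|m IH] /=; first exact: sub0v.
rewrite subv_add addnS LamS; apply/andP; split.
  by apply: subv_trans (limgS _ IH) (addvSl _ _).
by case: ifP => hk; [exact: addvSr | exact: sub0v].
Qed.

Lemma state_VN j m u : state A b u (tm j) 0 m \in (Vf j m + Nf j m)%VS.
Proof.
elim: m => [|m IH] /=; first by rewrite mem0v.
case/memv_addP: IH => v1 h1 [v2 h2 ->]; rewrite tmD mulmxDr.
case hk: (kick (j + m)) => /=.
  rewrite addv0 -addrA [_ + u _ *: _]addrC addrA; apply: memv_add; last by rewrite -AmE memv_img.
  by apply: memv_add; [rewrite -AmE memv_img | rewrite memvZ // memv_line].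
rewrite addv0 -addrA; apply: memv_add; first by rewrite -AmE memv_img.
by apply: memv_add; [rewrite -AmE memv_img | rewrite memvZ // memv_line].
Qed.

Lemma dim_limg_le (f : 'End('cV[R]_n)) U : (\dim (f @: U) <= \dim U)%N.
Proof. by rewrite -(limg_ker_dim f U) leq_addl. Qed.

Lemma Nf_dim j m : (\dim (Nf j m) <= \sum_(i < m) (~~ kick (j + i) : nat))%N.
Proof.
elim: m => [|m IH] /=; first by rewrite dimv0.
rewrite big_ord_recr /=; apply: leq_trans (dimv_add_leqif _ _) _.
apply: leq_add; first exact: leq_trans (dim_limg_le _ _) IH.
by case: (kick (j + m)); rewrite ?dimv0 // dim_vline leq_b1.
Qed.

Lemma W4 : (nK <= \dim (Lam r))%N /\ Vf r n = Lam (r + n).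
Proof.
have hfull : (fullv <= Vf r n + Nf r n)%VS.
  apply/subvP => xf _; have [u hu] := hC (tm r) 0 xf; rewrite -hu; exact: state_VN.
have hn : (n <= \dim (Vf r n) + \sum_(i < n) (~~ kick (r + i) : nat))%N.
  have := dimvS hfull; rewrite dimvf dim_matrix mulr1 => h.
  apply: leq_trans h _; apply: leq_trans (dimv_add_leqif _ _) _.
  by rewrite leq_add2l Nf_dim.
have hsum : (nK + \sum_(i < n) (~~ kick (r + i) : nat) = n)%N.
  rewrite /nK -big_split /= -[n in RHS]card_ord -sum1_card.
  by apply: eq_bigr => i _; case: (kick (r + i)).
have h1 : (nK <= \dim (Vf r n))%N.
  by rewrite -(leq_add2r (\sum_(i < n) (~~ kick (r + i) : nat))) hsum.
have h2 : (\dim (Vf r n) <= \dim (Lam r))%N by rewrite hr dimvS // Vf_Lam.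
split; first exact: leq_trans h1 h2.
apply/eqP; rewrite eqEdim Vf_Lam /= -hr.
exact: leq_trans (W3) h1.
Qed.


Lemma Vf_steer j m v : v \in Vf j m -> exists u : int -> R,
  (forall i, (i < m)%N -> ~~ kick (j + i) -> u (tm (j + i)) = 0) /\
  state A b u (tm j) 0 m = v.
Proof.
elim: m v => [|m IH] v /=.
  by rewrite memv0 => /eqP ->; exists (fun _ => 0).
case/memv_addP=> v1 /memv_imgP[y1 hy1 ->] [v2 hv2 ->].
have [a ha] : exists a, v2 = a *: bt (j + m) /\ (~~ kick (j + m) -> a = 0).
  move: hv2; case: ifP => hk.
    by case/vlineP=> a ->; exists a; split => //; rewrite hk.
  by rewrite memv0 => /eqP ->; exists 0; rewrite scale0r.
case: ha => ha1 ha2.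
have [u1 [hu1 hs1]] := IH _ hy1.
pose u := fun k => if k == tm (j + m) then a else u1 k.
exists u; split.
  move=> i; rewrite ltnS leq_eqVlt => /orP[/eqP ->|hi] hk.
    by rewrite /u eqxx ha2.
  by rewrite /u tm_eq eqn_add2l (ltn_eqF hi) hu1.
have hl : state A b u (tm j) 0 m = state A b u1 (tm j) 0 m.
  by apply: state_loc => i hi; rewrite /u tmD tm_eq eqn_add2l (ltn_eqF hi).
by rewrite hl hs1 tmD /u eqxx AmE ha1.
Qed.


Lemma steer_S m j y u :
  (forall i, (i < m)%N -> ~~ kick (j + i) -> u (tm (j + i)) = 0) ->
  state A b u (tm j) y m = 0 -> y \in Sb m j.
Proof.
elim: m j y => [|m IH] j y hu; first by move=> /= ->; rewrite mem0v.
rewrite state_front => hs /=.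
have hS : A (tm j) *m y + u (tm j) *: bt j \in Sb m j.+1.
  have e : tm j + 1 = tm j.+1 by rewrite tmD addn1.
  rewrite e in hs; apply: (IH j.+1) hs => i hi hk.
  by move: (hu i.+1 hi); rewrite addnS -addSn => ->.
rewrite -memv_preim AmE.
case hk: (kick j).
  rewrite -[A _ *m y](addrK (u (tm j) *: bt j)); apply: memv_add => //.
  by rewrite memvN memvZ // memv_line.
move: (hu 0%N (ltn0Sn _)); rewrite addn0 hk => /(_ isT) h0.
by rewrite h0 scale0r addr0 in hS; rewrite addv0.
Qed.

Lemma Lam_S : (Lam r <= Sb n r)%VS.
Proof.
apply/subvP => y hy.
have hv : - (PhiA r n *m y) \in Vf r n.
  by rewrite memvN (proj2 W4) Lam_PhiA.
have [u [hu hs]] := Vf_steer hv.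
apply: steer_S hu _.
by rewrite state_lin hs state0 subrr.
Qed.


Lemma Wdim d : (d <= n)%N -> \dim (Lam (r + d)) = \dim (Lam r).
Proof.
move=> hd; apply/eqP; rewrite eqn_leq; apply/andP; split.
  by rewrite hr; apply: Lam_dim_mono; rewrite leq_add2l.
exact: Lam_dim_mono (leq_addr _ _).
Qed.

Definition T d := (Sb (n - d) (r + d) :&: Lam (r + d))%VS.

Lemma T_step d y : (d < n)%N -> y \in T d ->
  A (tm (r + d)) *m y \in (T d.+1 + (if kick (r + d) then <[bt (r + d)]> else 0))%VS.
Proof.
move=> hd; rewrite /T memv_cap -(subnSK hd) => /andP[h1 h2].
by have := step_mem h1 h2; rewrite addnS.
Qed.

Definition Pm d : 'End('cV[R]_n) :=
  if kick (r + d) then (addv_pi1 (T d.+1) <[bt (r + d)]> \o Am (r + d))%VF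
  else Am (r + d).

Lemma T_Lam d : (T d <= Lam (r + d))%VS.
Proof. exact: capvSr. Qed.

Lemma Pm_T d y : (d < n)%N -> y \in T d -> Pm d y \in T d.+1.
Proof.
move=> hd hy; rewrite /Pm; case hk: (kick (r + d)); first by rewrite comp_lfunE memv_pi1.
by have := T_step hd hy; rewrite hk addv0 AmE.
Qed.

Lemma Pm_sub d : (d < n)%N -> (Pm d @: T d <= T d.+1)%VS.
Proof. by move=> hd; apply/subvP => v /memv_imgP[y hy ->]; exact: Pm_T. Qed.

Lemma Pm_ker d : (d < n)%N -> (\dim (T d :&: lker (Pm d)) <= kick (r + d))%N.
Proof.
move=> hd; case hk: (kick (r + d)); last first.
  rewrite /Pm hk (ker0_nk (negbT hk) (T_Lam d)) dimv0 //.
apply: leq_trans (dimvS (_ : (_ <= <[wt (r + d)]>)%VS)) _; last by rewrite dim_vline leq_b1.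
apply/subvP => y; rewrite memv_cap memv_ker => /andP[hy /eqP hP].
have hs := T_step hd hy; rewrite hk in hs.
rewrite /Pm hk comp_lfunE AmE in hP.
have := addv_pi1_pi2 hs; rewrite hP add0r => e.
have := memv_pi2 (T d.+1) <[bt (r + d)]> (A (tm (r + d)) *m y).
rewrite e => /vlineP[a ha].
have [k ->] := K1t ha; by rewrite memvZ // memv_line.
Qed.

Lemma T0 : T 0 = Lam r.
Proof. by rewrite /T subn0 addn0; apply/capv_idPr; exact: Lam_S. Qed.

Lemma ks_step d : (d < n)%N -> ks (r + d) (n - d) = (kick (r + d) + ks (r + d.+1) (n - d.+1))%N.
Proof. by move=> hd; rewrite -(subnSK hd) ksS addnS. Qed.

Lemma T_dim d : (d <= n)%N -> (ks (r + d) (n - d) <= \dim (T d))%N.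
Proof.
elim: d => [|d IH] hd; first by rewrite T0 subn0 addn0; exact: (proj1 W4).
have hd' : (d < n)%N by [].
apply: leq_trans (dimvS (Pm_sub hd')).
have := IH (ltnW hd); rewrite (ks_step hd') -(limg_ker_dim (Pm d) (T d)) => h.
rewrite -(leq_add2l (kick (r + d))); apply: leq_trans h _.
by rewrite leq_add2r Pm_ker.
Qed.

Lemma Pm_img d : (d < n)%N -> (Pm d @: T d)%VS = T d.+1.
Proof.
move=> hd; apply/eqP; rewrite eqEdim Pm_sub //=.
apply: leq_trans (W5 _ _) _.
have := T_dim (ltnW hd); rewrite (ks_step hd) -(limg_ker_dim (Pm d) (T d)) => h.
rewrite -(leq_add2l (kick (r + d))); apply: leq_trans h _.
by rewrite leq_add2r Pm_ker.
Qed.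

Lemma wT d : (d < n)%N -> kick (r + d) -> wt (r + d) \in T d.
Proof.
move=> hd hk; rewrite /T memv_cap; apply/andP; split.
  rewrite -(subnSK hd) [Sb _ _]/= -memv_preim AmE mulmxA mul_mx_adj mul_scalar_mx hk.
  rewrite -[_ *: _]add0r; apply: memv_add; first exact: mem0v.
  by rewrite memvZ // memv_line.
apply: W1 hk _; rewrite -addnS !Wdim //; exact: ltnW.
Qed.


Lemma GW d (l : seq 'Hom('cV[R]_n, 'M[R]_1)) : (d <= n)%N -> exists F,
  z F (r + d) \in T d /\ forall phi, phi \in l ->
  (exists2 y, y \in T d & phi y != 0) -> phi (z F (r + d)) != 0.
Proof.
elim: d l => [|d IH] l hd.
  have [F hF] := GEN r l; exists F; rewrite addn0 T0; split; first exact: z_Lam.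
  by move=> phi hphi hnz; apply: hF.
have hd' : (d < n)%N by [].
set l' := Cm (r + d) :: [seq (phi \o Pm d)%VF | phi <- l].
have [F [hz hF]] := IH l' (ltnW hd).
set zz := z F (r + d).
have hc : kick (r + d) -> (c (tm (r + d)) *m zz) 0 0 != 0.
  move=> hk; have : Cm (r + d) zz != 0.
    apply: hF; first by rewrite inE eqxx.
    by exists (wt (r + d)); [exact: wT | rewrite CmE mx1_neq0; exact: hcw].
  by rewrite CmE mx1_neq0.
have [a ha] : exists a, addv_pi2 (T d.+1) <[bt (r + d)]> (A (tm (r + d)) *m zz) = a *: bt (r + d).
  by apply/vlineP; exact: memv_pi2.
pose f := if kick (r + d) then - a / (c (tm (r + d)) *m zz) 0 0 else 0.
pose F' := fun k => if k == tm (r + d) then f else F k.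
have ez : z F' (r + d) = zz.
  by apply: cl_loc => i hi; rewrite /F' tm_eq (ltn_eqF hi).
have eP : z F' (r + d.+1) = Pm d zz.
  rewrite addnS clS ez /F' eqxx /f /Pm; case hk: (kick (r + d)).
    rewrite comp_lfunE AmE.
    have hs := T_step hd' hz; rewrite hk in hs.
    have e := addv_pi1_pi2 hs.
    rewrite divfK ?hc // scaleNr -ha.
    by apply/eqP; rewrite subr_eq e.
  by rewrite mul0r scale0r addr0 AmE.
exists F'; split; first by rewrite eP; exact: Pm_T.
move=> phi hphi [y hy hny]; rewrite eP.
rewrite -(Pm_img hd') in hy; case/memv_imgP: hy => y0 hy0 ey.
have : (phi \o Pm d)%VF zz != 0.
  apply: hF.
    by rewrite inE; apply/orP; right; exact: (map_f (fun phi => (phi \o Pm d)%VF) hphi).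
  by exists y0 => //; rewrite comp_lfunE -ey.
by rewrite comp_lfunE.
Qed.

Lemma SV_window : exists F, z F (r + n) = 0.
Proof.
have [F [hz _]] := GW [::] (leqnn n); exists F.
by move: hz; rewrite /T subnn /= cap0v memv0 => /eqP.
Qed.

End Window.

Theorem SV : exists F, z F (n * n + n) = 0.
Proof.
have [k hk hr] := pigeon; have [F hF] := SV_window hr; exists F.
have hle : (k * n + n <= n * n + n)%N by rewrite leq_add2r leq_mul2r hk orbT.
rewrite -(subnK hle) addnC cl_stateE PhiF_comp -mulmxA -[PhiF _ _ _ F s _ *m x]cl_stateE hF mulmx0 //.
Qed.

End SV.

Lemma rank_drop (R : realType) n (P Q : 'M[R]_n) j :
  col j P != 0 -> Q *m col j P = 0 -> (\rank (Q *m P) < \rank P)%N.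
Proof.
move=> hv hQ.
have h := mxrank_mul_ker P^T Q^T.
have hsub : ((col j P)^T <= (P^T :&: kermx Q^T))%MS.
  rewrite sub_capmx tr_col row_sub /=; apply/sub_kermxP.
  by rewrite -tr_col -trmx_mul hQ trmx0.
have h1 : (1 <= \rank (P^T :&: kermx Q^T))%N.
  by apply: leq_trans (mxrankS hsub); rewrite rank_rV trmx_eq0 hv.
rewrite -mxrank_tr trmx_mul -[\rank P]mxrank_tr -h.
by rewrite -addn1 leq_add2l.
Qed.

Section RR.
Variables (R : realType) (n : nat).
Variables (A : int -> 'M[R]_n) (b : int -> 'cV[R]_n) (c : int -> 'rV[R]_n).
Hypothesis hW : forall k, (c k *m \adj (A k) *m b k) 0 0 != 0.
Hypothesis hC : completely_controllable A b.
Hypothesis hO : completely_observable A b c.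

Local Notation T := (n * n + n)%N.

Lemma SVm s (v : 'cV[R]_n) : exists F, PhiF A b c F s T *m v = 0.
Proof. by have [F hF] := SV hW hC hO s v; exists F; rewrite -cl_stateE. Qed.

Lemma RR rho : forall s (P : 'M[R]_n), (\rank P <= rho)%N ->
  exists F, PhiF A b c F s (rho * T) *m P = 0.
Proof.
elim: rho => [|rho IH] s P hP.
  by exists (fun _ => 0); move: hP; rewrite leqn0 mxrank_eq0 => /eqP ->; rewrite mulmx0.
case: (eqVneq P 0) => [->|hP0]; first by exists (fun _ => 0); rewrite mulmx0.
have [j hj] : exists j, col j P != 0.
  case/boolP: [exists j, col j P != 0]; first by case/existsP=> j h; exists j.
  move/existsPn=> H; case/eqP: hP0; apply/matrixP=> i j.
  by move: (H j); rewrite negbK => /eqP /matrixP /(_ i 0); rewrite !mxE.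
have [F1 hF1] := SVm s (col j P).
set P' := PhiF A b c F1 s T *m P.
have hP' : (\rank P' <= rho)%N.
  by rewrite -ltnS; apply: leq_trans (rank_drop hj hF1) hP.
have [F2 hF2] := IH (s + T%:Z) P' hP'.
pose F := fun k => if (k < s + T%:Z)%R then F1 k else F2 k.
exists F.
rewrite mulSn PhiF_comp.
have e1 : PhiF A b c F s T = PhiF A b c F1 s T.
  apply: PhiF_loc => i hi; rewrite /F ifT //; lia.
have e2 : PhiF A b c F (s + T%:Z) (rho * T) = PhiF A b c F2 (s + T%:Z) (rho * T).
  apply: PhiF_loc => i hi; rewrite /F ifF //; lia.
by rewrite e1 e2 -mulmxA.
Qed.

Local Notation L := (n ^ 4 + n ^ 3 + n ^ 2)%N.

Lemma block s : exists F, PhiF A b c F s L = 0.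
Proof.
have [F hF] := RR s (rank_leq_row (1%:M : 'M[R]_n)).
exists F; rewrite mulmx1 in hF.
have hle : (n * T <= L)%N.
  rewrite mulnDr mulnA; have -> : (n ^ 4 = n * n * n * n)%N by rewrite !expnS expn0 muln1 !mulnA.
  have -> : (n ^ 3 = n * n * n)%N by rewrite !expnS expn0 muln1 !mulnA.
  have -> : (n ^ 2 = n * n)%N by rewrite !expnS expn0 muln1.
  by rewrite -addnA leq_addl.
by rewrite -(subnK hle) addnC PhiF_comp hF mulmx0.
Qed.

End RR.

Unset Implicit Arguments.

Theorem theorem5 (R : realType) (n : nat)
    (A : int -> 'M[R]_n) (b : int -> 'cV[R]_n) (c : int -> 'rV[R]_n) :
  completely_controllable A b ->
  completely_observable A b c ->
  (forall k : int, (c k *m \adj (A k) *m b k) 0 0 != 0) ->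
  exists F : int -> R,
    forall (k0 : int) (x0 : 'cV[R]_n),
      cl_state A b c F k0 x0 (2 * (n ^ 4 + n ^ 3 + n ^ 2))%N = 0.
Proof.
move=> hC hO hW.
case: (posnP n) => [n0|npos].
  exists (fun _ => 0) => k0 x0; apply/matrixP => i j.
  by have := ltn_ord i; rewrite {2}n0.
set L := (n ^ 4 + n ^ 3 + n ^ 2)%N.
have hL : (0 < L)%N by rewrite /L (leq_trans _ (leq_addl _ _)) // expn_gt0 npos.
have hLz : (L%:Z != 0) by rewrite eqz_nat -lt0n.
have hbl : forall q : int, exists F, PhiF A b c F (q * L%:Z) L = 0.
  by move=> q; exact: block hW hC hO (q * L%:Z).
pose G q := proj1_sig (boolp.constructive_indefinite_description (hbl q)).
have hG : forall q, PhiF A b c (G q) (q * L%:Z) L = 0.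
  by move=> q; exact: proj2_sig (boolp.constructive_indefinite_description (hbl q)).
pose F k := G (k %/ L%:Z)%Z k.
exists F => k0 x0.
set q := ((k0 + L%:Z - 1) %/ L%:Z)%Z.
have hdiv := divz_eq (k0 + L%:Z - 1) L%:Z.
have hr0 := modz_ge0 (k0 + L%:Z - 1) hLz.
have hr1 : ((k0 + L%:Z - 1) %% L%:Z < L%:Z)%Z by apply: ltz_pmod; rewrite ltz_nat.
have ha0 : 0 <= q * L%:Z - k0 by rewrite -/q in hdiv; lia.
have ha1 : q * L%:Z - k0 < L%:Z by rewrite -/q in hdiv; lia.
set an := absz (q * L%:Z - k0)%R.
have ean : an%:Z = q * L%:Z - k0 by rewrite /an gez0_abs.
have han : (an <= L)%N by rewrite -lez_nat ean; lia.
have e2 : (2 * L = an + L + (L - an))%N by lia.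
rewrite e2 cl_stateE PhiF_comp [PhiF _ _ _ _ k0 (an + L)]PhiF_comp.
have ek : k0 + an%:Z = q * L%:Z by rewrite ean; lia.
suff -> : PhiF A b c F (k0 + an%:Z) L = 0 by rewrite mul0mx mulmx0 mul0mx.
rewrite ek -(hG q); apply: PhiF_loc => i hi; rewrite /F.
by rewrite divzMDl // divz_small ?addr0 //.
Qed.
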